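(* Let $D=(E,\mathcal F)$ be a delta-matroid and let $X$ be a subset of $E$ that is not feasible, i.e. $X\notin\mathcal F$. Let $\mathcal B$ be the collection of all sets $Y\subseteq E$ such that $X\triangle Y\in\mathcal F$ and $|Y|$ is minimum among all subsets $Y'\subseteq E$ with $X\triangle Y'\in\mathcal F$. Then $\mathcal B$ is the collection of bases of a matroid with ground set $E$.
   Context: A delta-matroid $(E,\mathcal F)$ consists of a finite ground set $E$ and a non-empty collection $\mathcal F$ of subsets of $E$ (the feasible sets) satisfying the symmetric exchange axiom: for all $X,Y\in\mathcal F$ and every $e\in X\triangle Y$ there exists $f\in X\triangle Y$ (possibly $f=e$) with $X\triangle\{e,f\}\in\mathcal F$. *)

(* Defs.v *)
(* The ground set E is modelled as a finite type T
   (E = [set: T]); subsets of E are elements of {set T}. *)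
From mathcomp Require Import all_boot.
Set Implicit Arguments. Unset Strict Implicit. Unset Printing Implicit Defensive.

Definition symdiff (T : finType) (X Y : {set T}) : {set T} :=
  (X :\: Y) :|: (Y :\: X).

Definition delta_matroid (T : finType) (F : {set {set T}}) : Prop :=
  F != set0 /\
  forall X Y, X \in F -> Y \in F ->
    forall e, e \in symdiff X Y ->
      exists2 f, f \in symdiff X Y & symdiff X [set e; f] \in F.

Definition matroid_bases (T : finType) (B : {set {set T}}) : Prop :=
  B != set0 /\
  forall B1 B2, B1 \in B -> B2 \in B ->
    forall e, e \in B1 :\: B2 ->
      exists2 f, f \in B2 :\: B1 & (B1 :\ e) :|: [set f] \in B.

Definition min_transl (T : finType) (F : {set {set T}}) (X : {set T})
  : {set {set T}} :=
  [set Y : {set T} | (symdiff X Y \in F) &&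
     [forall Y' : {set T}, (symdiff X Y' \in F) ==> (#|Y| <= #|Y'|)]].

(* Main.v *)
Require Import Defs.
From mathcomp Require Import all_boot.

Lemma in_symdiff (T : finType) (A B : {set T}) x :
  (x \in symdiff A B) = ((x \in A) != (x \in B)).
Proof. by rewrite /symdiff !inE; case: (x \in A); case: (x \in B). Qed.

Theorem lemma4p3 (T : finType) (F : {set {set T}}) (X : {set T}) :
  delta_matroid F -> X \notin F -> matroid_bases (min_transl F X).
Proof.
move=> [Fn0 Fex] _.
split.
  case/set0Pn: Fn0 => Z ZF.
  have PZ : symdiff X (symdiff X Z) \in F.
    suff -> : symdiff X (symdiff X Z) = Z by [].
    by apply/setP => x; rewrite !in_symdiff; case: (x \in X); case: (x \in Z).
  case: (@arg_minnP _ (symdiff X Z) (fun Y : {set T} => symdiff X Y \in F) (fun Y : {set T} => #|Y|) PZ) => Y PY minY.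
  apply/set0Pn; exists Y; rewrite inE PY /=.
  by apply/forallP => Y'; apply/implyP => H; apply: minY.
move=> B1 B2; rewrite !inE => /andP [F1 /forallP m1] /andP [F2 _] e eB.
have eD : e \in symdiff (symdiff X B1) (symdiff X B2).
  move: eB; rewrite !in_symdiff !inE => /andP [/negbTE -> ->].
  by case: (e \in X).
have [f fD fF] := Fex _ _ F1 F2 e eD.
set Y' := symdiff B1 [set e; f].
have HY : symdiff X Y' \in F.
  suff <- : symdiff (symdiff X B1) [set e; f] = symdiff X Y' by [].
  apply/setP => x; rewrite !in_symdiff.
  by case: (x \in X); case: (x \in B1); case: (x \in [set e; f]).
have le := implyP (m1 Y') HY.
have eB1 : e \in B1 by move: eB; rewrite inE => /andP [_ ->].
have eB2 : e \notin B2 by move: eB; rewrite inE => /andP [-> _].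
have fD' : f \in symdiff B1 B2.
  by move: fD; rewrite !in_symdiff; case: (f \in X); case: (f \in B1); case: (f \in B2).
case: (eqVneq f e) => [fe|fne].
  have : Y' = B1 :\ e.
    apply/setP => x; rewrite in_symdiff !inE fe orbb.
    by case: (eqVneq x e) => [->|xe] /=; [rewrite eB1 | case: (x \in B1)].
  move=> E; move: le; rewrite E (cardsD1 e B1) eB1.
  by rewrite add1n ltnn.
case fB1 : (f \in B1).
  have : Y' = (B1 :\ e) :\ f.
    apply/setP => x; rewrite in_symdiff !inE.
    case: (eqVneq x e) => [->|xe]; first by rewrite eB1 eqxx /= andbF.
    case: (eqVneq x f) => [->|xf]; first by rewrite fB1.
    by rewrite /=; case: (x \in B1).
  move=> E; move: le; rewrite E (cardsD1 e B1) eB1.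
  rewrite (cardsD1 f (B1 :\ e)) !inE fne fB1 /=.
  by rewrite !add1n ltnNge leqnSn.
exists f.
  by rewrite !inE fB1 /=; move: fD'; rewrite in_symdiff fB1; case: (f \in B2).
have E : (B1 :\ e) :|: [set f] = Y'.
  apply/setP => x; rewrite in_symdiff !inE.
  case: (eqVneq x e) => [->|xe]; first by rewrite eB1 eqxx eq_sym (negbTE fne).
  case: (eqVneq x f) => [->|xf]; first by rewrite fB1.
  by rewrite /= orbF; case: (x \in B1).
rewrite E inE HY /=.
apply/forallP => Z; apply/implyP => HZ.
have := implyP (m1 Z) HZ.
rewrite -E setUC cardsU1 !inE fB1 andbF /=.
by rewrite (cardsD1 e B1) eB1 add1n.
Qed.
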